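(* Assume exactness and $\mathbf{A}\neq 0$. Let $x^0\in\mathbb{R}^n$, $y^0=0\in\mathbb{R}^m$, and let $\{y^k\}$ be generated by stochastic dual subspace ascent $$y^{k+1}=y^k+\omega\mathbf{S}_k\lambda^k,\qquad \lambda^k=(\mathbf{S}_k^\top\mathbf{A}\mathbf{B}^{-1}\mathbf{A}^\top\mathbf{S}_k)^\dagger\mathbf{S}_k^\top\big(b-\mathbf{A}(x^0+\mathbf{B}^{-1}\mathbf{A}^\top y^k)\big),$$ with $0<\omega<2$. Let $y^*$ be any maximizer of $D$. Then for all $k\ge0$ $$\mathbb{E}[D(y^* )-D(y^k)]\le\big[1-\omega(2-\omega)\lambda_{\min}^+\big]^k\big(D(y^* )-D(y^0)\big).$$
   Context: Let $\mathbf{A}\in\mathbb{R}^{m\times n}$ and $b\in\mathbb{R}^m$ be such that the linear system $\mathbf{A}x=b$ is consistent. Let $\mathbf{B}\in\mathbb{R}^{n\times n}$ be symmetric positive definite and $\|v\|_{\mathbf{B}^{-1}}^2=v^\top\mathbf{B}^{-1}v$. For the given $x^0$, the dual function is $D(y)=(b-\mathbf{A}x^0)^\top y-\tfrac12\|\mathbf{A}^\top y\|_{\mathbf{B}^{-1}}^2$, $y\in\mathbb{R}^m$ (it is bounded above and attains its maximum). Let $\mathcal{D}$ be a probability distribution over random real matrices $\mathbf{S}$ with $m$ rows (any number of columns). For $\mathbf{S}\sim\mathcal{D}$ set $\mathbf{H}=\mathbf{S}(\mathbf{S}^\top\mathbf{A}\mathbf{B}^{-1}\mathbf{A}^\top\mathbf{S})^\dagger\mathbf{S}^\top$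 ($\dagger$ denotes the Moore–Penrose pseudoinverse) and $\mathbf{Z}=\mathbf{A}^\top\mathbf{H}\mathbf{A}$; $\mathbb{E}[\mathbf{Z}]$ is assumed finite. Let $\mathbf{W}=\mathbf{B}^{-1/2}\mathbb{E}[\mathbf{Z}]\mathbf{B}^{-1/2}$ (its eigenvalues lie in $[0,1]$); $\lambda_{\min}^+$ is its smallest nonzero eigenvalue. Exactness means $\mathrm{Null}(\mathbb{E}[\mathbf{Z}])=\mathrm{Null}(\mathbf{A})$. The matrices $\mathbf{S}_k$ are drawn i.i.d. from $\mathcal{D}$. *)

(* Defs.v *)
From HB Require Import structures.
From mathcomp Require Import all_boot all_order all_algebra.
From mathcomp Require Import all_classical all_reals all_analysis.
Set Implicit Arguments. Unset Strict Implicit. Unset Printing Implicit Defensive.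
Import Order.TTheory GRing.Theory Num.Theory.
Local Open Scope ring_scope.
Local Open Scope classical_set_scope.

Section Defs.
Variable R : realType.

Definition penrose (p q : nat) (M : 'M[R]_(p, q)) (X : 'M[R]_(q, p)) : Prop :=
  [/\ M *m X *m M = M, X *m M *m X = X,
      (M *m X)^T = M *m X & (X *m M)^T = X *m M].

Definition mpinv (p q : nat) (M : 'M[R]_(p, q)) : 'M[R]_(q, p) :=
  xget 0 [set X | penrose M X].

Definition spd (n : nat) (B : 'M[R]_n) : Prop :=
  B^T = B /\ forall x : 'cV[R]_n, x != 0 -> 0 < (x^T *m B *m x) 0 0.

Definition spsd (n : nat) (B : 'M[R]_n) : Prop :=
  B^T = B /\ forall x : 'cV[R]_n, 0 <= (x^T *m B *m x) 0 0.

Definition mxsqrt (n : nat) (C : 'M[R]_n) : 'M[R]_n :=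
  xget 0 [set X | spsd X /\ X *m X = C].

Definition is_lambda_min_plus (n : nat) (W : 'M[R]_n) (l : R) : Prop :=
  [/\ eigenvalue W l, l != 0 &
      forall mu, eigenvalue W mu -> mu != 0 -> l <= mu].

Definition dualD (m n : nat) (A : 'M[R]_(m, n)) (B : 'M[R]_n)
  (b : 'cV[R]_m) (x0 : 'cV[R]_n) (y : 'cV[R]_m) : R :=
  ((b - A *m x0)^T *m y) 0 0
  - 2^-1 * ((A^T *m y)^T *m invmx B *m (A^T *m y)) 0 0.

Definition Hmat (m n q : nat) (A : 'M[R]_(m, n)) (B : 'M[R]_n)
  (S : 'M[R]_(m, q)) : 'M[R]_m :=
  S *m mpinv (S^T *m A *m invmx B *m A^T *m S) *m S^T.

Definition sdsa_step (m n q : nat) (A : 'M[R]_(m, n)) (B : 'M[R]_n)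
  (b : 'cV[R]_m) (x0 : 'cV[R]_n) (omega : R) (S : 'M[R]_(m, q))
  (y : 'cV[R]_m) : 'cV[R]_m :=
  let lam := mpinv (S^T *m A *m invmx B *m A^T *m S)
             *m S^T *m (b - A *m (x0 + invmx B *m A^T *m y)) in
  y + omega *: (S *m lam).

Definition sdsa_iter (d : measure_display) (T : measurableType d)
  (m n : nat) (A : 'M[R]_(m, n)) (B : 'M[R]_n)
  (b : 'cV[R]_m) (x0 : 'cV[R]_n) (omega : R)
  (S : T -> {q : nat & 'M[R]_(m, q)}) (y0 : 'cV[R]_m) (s : seq T) : 'cV[R]_m :=
  foldl (fun y t => sdsa_step A B b x0 omega (projT2 (S t)) y) y0 s.

(* Expectation over k i.i.d. draws t_0, ..., t_{k-1} ~ mu of f [:: t_0; ...; t_{k-1}]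
   (integral against the product measure mu^{(x) k}, as iterated integrals). *)
Fixpoint iid_expect (d : measure_display) (T : measurableType d)
  (mu : probability T R) (k : nat) (f : seq T -> \bar R) : \bar R :=
  match k with
  | 0 => f [::]
  | k'.+1 => (\int[mu]_t iid_expect mu k' (fun s => f (t :: s)))%E
  end.

End Defs.

(* Main.v *)
Require Import Defs.
From HB Require Import structures.
From mathcomp Require Import all_boot all_order all_algebra.
From mathcomp Require Import all_classical all_reals all_analysis.
From mathcomp Require Import complex.
From mathcomp Require Import ring lra.
Import Order.TTheory GRing.Theory Num.Theory.
Local Open Scope ring_scope.

Module SpecM.
Import Num.Def.
Local Open Scope sesquilinear_scope.
Section Spec.
Variable R : realType.
Local Notation C := (R[i]).
Local Notation rc := (real_complex R).

Lemma eig_transfer n (W : 'M[R]_n) k :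
  eigenvalue (map_mx rc W) (rc k) -> eigenvalue W k.
Proof.
by rewrite !eigenvalue_root_char -map_char_poly fmorph_root.
Qed.

Lemma rc00 p q (A : 'M[R]_(1, p)) (B : 'M[R]_(p,q)) (Cm : 'M[R]_(q, 1)) :
  rc ((A *m B *m Cm) 0 0) = (map_mx rc A *m map_mx rc B *m map_mx rc Cm) 0 0.
Proof. by rewrite -!map_mxM [RHS]mxE. Qed.

Lemma rc00' p (A : 'M[R]_(1, p)) (Cm : 'M[R]_(p, 1)) :
  rc ((A *m Cm) 0 0) = (map_mx rc A *m map_mx rc Cm) 0 0.
Proof. by rewrite -!map_mxM [RHS]mxE. Qed.

Lemma spec_bound n (W : 'M[R]_n) lam (z u : 'cV[R]_n) :
  W^T = W -> is_lambda_min_plus W lam -> z = W *m u ->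
  lam * (z^T *m z) 0 0 <= (z^T *m W *m z) 0 0.
Proof.
move=> Wsym [_ _ lammin] ->.
set WC := map_mx rc W.
have WCsym : WC^T = WC by rewrite /WC map_trmx Wsym.
have WCreal : WC \is a realmx.
  by apply/mxOverP => i j; rewrite mxE; apply/complex_realP; exists (W i j).
have herm : WC \is hermsymmx.
  apply: realsym_hermsym => //; apply/is_hermitianmxP.
  rewrite expr0 scale1r; apply/matrixP=> i j; rewrite !mxE.
  by have := congr1 (fun M : 'M[R]_n => M j i) Wsym; rewrite mxE => ->.
set P := spectralmx WC; set D := spectral_diag WC.
have Pu : P \is unitarymx by apply: spectral_unitarymx.
have eqW : WC = invmx P *m diag_mx D *m P.
  exact/orthomx_spectralP/hermitian_normalmx.
have PPt : P *m P^t* = 1%:M by apply/unitarymxP.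
have PtP : P^t* *m P = 1%:M by apply: mulmx1C.
rewrite invmx_unitary // in eqW.
have Dreal : D \is a realmx by apply: hermitian_spectral_diag_real.
set zC := map_mx rc (W *m u).
set uC := map_mx rc u.
have zCE : zC = WC *m uC by rewrite /zC map_mxM.
set w := uC^T *m P^t*.
set c := w *m diag_mx D.
have zP : zC^T *m P^t* = c.
  rewrite zCE trmx_mul WCsym eqW /c /w !mulmxA -[_ *m P *m P^t*]mulmxA PPt mulmx1.
  by [].
have zconj : map_mx conjC zC = zC.
  by apply/matrixP=> i j; rewrite !mxE conj_Creal //; apply/complex_realP; eexists.
have Pz : P *m zC = c^t*.
  by rewrite -zP trmx_mul map_mxM trmxCK trmxK zconj.
have key1 : (zC^T *m WC *m zC) = c *m diag_mx D *m c^t*.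
  by rewrite eqW !mulmxA zP -Pz !mulmxA.
have key2 : (zC^T *m zC) = c *m c^t*.
  by rewrite -[in LHS](mulmx1 zC^T) -PtP !mulmxA zP -mulmxA Pz.
rewrite -lecR rmorphM /= rc00 rc00' -!map_trmx -/zC -/WC key1 key2.
have cE i : c 0 i = w 0 i * D 0 i by rewrite /c mul_mx_diag mxE.
have eigD i : eigenvalue WC (D 0 i).
  apply/eigenvalueP; exists (row i P).
    have PW : P *m WC = diag_mx D *m P by rewrite eqW !mulmxA PPt mul1mx.
    by rewrite -row_mul PW row_mul row_diag_mx -scalemxAl -rowE.
  apply/eqP => r0.
  have : row i (P *m P^t* ) = 0 by rewrite row_mul r0 mul0mx.
  rewrite PPt => /rowP/(_ i); rewrite !mxE eqxx /= => /eqP.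
  by rewrite oner_eq0.
clearbody c.
rewrite mul_mx_diag !mxE mulr_sumr; apply: ler_sum => i _; rewrite !mxE.
case: (eqVneq (D 0 i) 0) => [D0|Dn0].
  by rewrite cE D0 !(mulr0, mul0r).
have /complex_realP [k Dk] := mxOverP Dreal 0 i.
have lk : lam <= k.
  apply: lammin; first by apply: eig_transfer; rewrite -Dk; exact: eigD.
  by apply: contraNneq Dn0 => k0; rewrite Dk k0.
rewrite -subr_ge0.
have -> : c 0 i * D 0 i * conjC (c 0 i) - lam%:C%C * (c 0 i * conjC (c 0 i))
   = (k - lam)%:C%C * (c 0 i * conjC (c 0 i)).
  rewrite Dk rmorphB /=; ring.
by apply: mulr_ge0; [rewrite ler0c subr_ge0 | apply: mul_conjC_ge0].
Qed.
End Spec.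

End SpecM.
Import SpecM.

Set Implicit Arguments. Unset Strict Implicit. Unset Printing Implicit Defensive.

Section Alg.
Variable R : realType.

Definition ip (k : nat) (u v : 'cV[R]_k) : R := (u^T *m v) 0 0.

Lemma ipC k (u v : 'cV[R]_k) : ip u v = ip v u.
Proof.
by rewrite /ip (_ : v^T *m u = (u^T *m v)^T) ?mxE // trmx_mul trmxK.
Qed.

Lemma ipDl k (u w v : 'cV[R]_k) : ip (u + w) v = ip u v + ip w v.
Proof. by rewrite /ip linearD /= mulmxDl mxE. Qed.

Lemma ipDr k (u w v : 'cV[R]_k) : ip v (u + w) = ip v u + ip v w.
Proof. by rewrite /ip mulmxDr mxE. Qed.

Lemma ipZl k a (u v : 'cV[R]_k) : ip (a *: u) v = a * ip u v.
Proof. by rewrite /ip linearZ /= -scalemxAl mxE. Qed.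

Lemma ipZr k a (u v : 'cV[R]_k) : ip v (a *: u) = a * ip v u.
Proof. by rewrite /ip -scalemxAr mxE. Qed.

Lemma ipNl k (u v : 'cV[R]_k) : ip (- u) v = - ip u v.
Proof. by rewrite -scaleN1r ipZl mulN1r. Qed.

Lemma ipNr k (u v : 'cV[R]_k) : ip v (- u) = - ip v u.
Proof. by rewrite -scaleN1r ipZr mulN1r. Qed.

Lemma ipBl k (u w v : 'cV[R]_k) : ip (u - w) v = ip u v - ip w v.
Proof. by rewrite ipDl ipNl. Qed.

Lemma ipBr k (u w v : 'cV[R]_k) : ip v (u - w) = ip v u - ip v w.
Proof. by rewrite ipDr ipNr. Qed.

Lemma ipM k l (K : 'M[R]_(k, l)) u v : ip u (K *m v) = ip (K^T *m u) v.
Proof. by rewrite /ip trmx_mul trmxK mulmxA. Qed.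

Lemma ip0r k (u : 'cV[R]_k) : ip u 0 = 0.
Proof. by rewrite /ip mulmx0 mxE. Qed.

Lemma ip_ge0 k (u : 'cV[R]_k) : 0 <= ip u u.
Proof.
rewrite /ip mxE; apply: sumr_ge0 => i _; rewrite mxE; rewrite -expr2; exact: sqr_ge0.
Qed.

Lemma ip_eq0 k (u : 'cV[R]_k) : ip u u = 0 -> u = 0.
Proof.
rewrite /ip mxE => /eqP; rewrite psumr_eq0; last first.
  by move=> i _; rewrite mxE; rewrite -expr2; exact: sqr_ge0.
move=> /allP H; apply/matrixP => i j; rewrite (ord1 j) [RHS]mxE.
have := H i (mem_index_enum _); rewrite mxE mulf_eq0 orbb => /eqP.
by [].
Qed.

Lemma quad_sum k (x : 'cV[R]_k) (K : 'M[R]_k) :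
  ip x (K *m x) = \sum_i \sum_j (x i 0 * x j 0) * K i j.
Proof.
rewrite /ip mxE; apply: eq_bigr => i _; rewrite !mxE mulr_sumr.
by apply: eq_bigr => j _; ring.
Qed.


Lemma penrose_uniq p q (K : 'M[R]_(p, q)) X Y :
  penrose K X -> penrose K Y -> X = Y.
Proof.
case=> X1 X2 X3 X4 [Y1 Y2 Y3 Y4].
have eX : X = X *m K *m Y.
  have h2 : (K *m X)^T = (K *m X)^T *m (K *m Y)^T.
    by rewrite -trmx_mul !mulmxA Y1.
  rewrite -{1}X2 -mulmxA -X3 h2 X3 Y3 !mulmxA X2 //.
have eY : Y = X *m K *m Y.
  have h2 : (Y *m K)^T = (X *m K)^T *m (Y *m K)^T.
    by rewrite -trmx_mul -!mulmxA [K *m (X *m K)]mulmxA X1.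
  by rewrite -{1}Y2 -Y4 h2 X4 Y4 -[_ *m (Y *m K) *m Y]mulmxA Y2.
by rewrite {1}eX -eY.
Qed.

Lemma mpinv_props p (K : 'M[R]_p) :
  K^T = K -> mpinv K *m K *m mpinv K = mpinv K /\ (mpinv K)^T = mpinv K.
Proof.
move=> Ks; rewrite /mpinv; case: xgetP => [P _ /= [P1 P2 P3 P4]|_].
  split => //; apply: (@penrose_uniq _ _ K); last by split.
  split.
  - by have := congr1 trmx P1; rewrite !trmx_mul Ks mulmxA.
  - by have := congr1 trmx P2; rewrite !trmx_mul Ks mulmxA.
  - by rewrite trmx_mul trmxK Ks -P4 trmx_mul Ks.
  - by rewrite trmx_mul trmxK Ks -P3 trmx_mul Ks.
by rewrite !mul0mx trmx0.
Qed.
End Alg.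

Section Prob.
Variables (R : realType) (m n : nat) (A : 'M[R]_(m, n)) (B : 'M[R]_n)
  (b : 'cV[R]_m) (x0 : 'cV[R]_n).
Hypothesis Bspd : spd B.
Local Notation Bi := (invmx B).
Local Notation M := (A *m invmx B *m A^T).
Local Notation c := (b - A *m x0).
Local Notation D := (dualD A B b x0).

Lemma B_unit : B \in unitmx.
Proof.
case: Bspd => Bs Bp; apply: contraT; rewrite unitmxE unitfE negbK => /det0P.
case=> v vn0 vB; have := Bp v^T.
rewrite trmxK vB mul0mx mxE ltxx; apply; apply: contra vn0 => /eqP.
by move=> /(congr1 trmx); rewrite trmxK trmx0 => ->.
Qed.

Lemma Bi_sym : Bi^T = Bi.
Proof. by rewrite trmx_inv; case: Bspd => ->. Qed.

Lemma M_sym : M^T = M.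
Proof. by rewrite !trmx_mul trmxK Bi_sym mulmxA. Qed.

Lemma dualDE y : D y = ip c y - 2^-1 * ip y (M *m y).
Proof.
by rewrite /dualD /ip trmx_mul trmxK !mulmxA.
Qed.

Lemma Dshift y e : D (y + e) = D y + ip (c - M *m y) e - 2^-1 * ip e (M *m e).
Proof.
rewrite !dualDE mulmxDr !ipDr !ipDl ?ipNl.
have -> : ip y (M *m e) = ip e (M *m y) by rewrite ipM M_sym ipC.
rewrite [ip (M *m y) e]ipC; by field.
Qed.

Lemma ip_Bi a : ip a (Bi *m a) = ip (Bi *m a) (B *m (Bi *m a)).
Proof. by rewrite mulmxA mulmxV ?B_unit // mul1mx ipC. Qed.

Lemma Bi_ge0 a : 0 <= ip a (Bi *m a).
Proof.
rewrite ip_Bi; case: Bspd => _ Bp.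
have [->|nz] := eqVneq (Bi *m a) 0; first by rewrite mulmx0 ip0r.
by apply/ltW; have := Bp _ nz; rewrite /ip mulmxA.
Qed.

Lemma Bi_gt0 a : a != 0 -> 0 < ip a (Bi *m a).
Proof.
move=> an0; rewrite ip_Bi; case: Bspd => _ Bp.
have nz : Bi *m a != 0.
  apply: contra an0 => /eqP h; apply/eqP.
  by rewrite -[a]mul1mx -(mulmxV B_unit) -mulmxA h mulmx0.
by have := Bp _ nz; rewrite /ip mulmxA.
Qed.

Lemma M_quad e : ip e (M *m e) = ip (A^T *m e) (Bi *m (A^T *m e)).
Proof. by rewrite /ip trmx_mul trmxK !mulmxA. Qed.

Lemma M_ge0 e : 0 <= ip e (M *m e).
Proof. by rewrite M_quad Bi_ge0. Qed.

Lemma opt_eq ys : (forall y, D y <= D ys) -> M *m ys = c.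
Proof.
move=> H; set r := c - M *m ys.
suff r0 : r = 0 by apply/eqP; rewrite eq_sym -subr_eq0 -/r r0.
apply: ip_eq0; set s := ip r r; set q := ip r (M *m r).
have q0 : 0 <= q by apply: M_ge0.
have s0 : 0 <= s by apply: ip_ge0.
set u := s / (q + 1).
have hs : s = u * (q + 1) by rewrite /u divfK // lt0r_neq0 // ltr_wpDl.
have u0 : 0 <= u by rewrite /u divr_ge0 // addr_ge0.
have := H (ys + u *: r).
rewrite Dshift -/r -scalemxAr !ipZl !ipZr -/s -/q => h.
have u2 : u ^+ 2 <= 0 by nra.
have : u = 0 by apply/eqP; rewrite -sqrf_eq0 eq_le u2 sqr_ge0.
by rewrite hs => ->; rewrite mul0r.
Qed.


Lemma ip0l k (u : 'cV[R]_k) : ip 0 u = 0.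
Proof. by rewrite ipC ip0r. Qed.

Lemma stepE q (Sm : 'M[R]_(m, q)) omega ys y : M *m ys = c ->
  sdsa_step A B b x0 omega Sm y = y + omega *: (Hmat A B Sm *m (M *m (ys - y))).
Proof.
move=> hys; rewrite /sdsa_step /Hmat; congr (_ + _ *: _).
have -> : b - A *m (x0 + Bi *m A^T *m y) = M *m (ys - y).
  by rewrite mulmxBr hys mulmxDr opprD addrA !mulmxA.
by rewrite !mulmxA.
Qed.

Lemma H_props q (Sm : 'M[R]_(m, q)) :
  (Hmat A B Sm)^T = Hmat A B Sm /\
  Hmat A B Sm *m M *m Hmat A B Sm = Hmat A B Sm.
Proof.
set K := Sm^T *m A *m Bi *m A^T *m Sm.
have Ks : K^T = K by rewrite /K !trmx_mul !trmxK Bi_sym !mulmxA.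
have [P1 P2] := mpinv_props Ks.
rewrite /Hmat -/K; split.
  by rewrite !trmx_mul trmxK P2 mulmxA.
rewrite -[in RHS]P1 /K !mulmxA.
by [].
Qed.

Lemma gE ys y : M *m ys = c ->
  D ys - D y = 2^-1 * ip (y - ys) (M *m (y - ys)).
Proof.
move=> hys; have -> : D y = D (ys + (y - ys)) by rewrite addrC subrK.
rewrite Dshift hys subrr ip0l.
by field.
Qed.

Lemma g_step q (Sm : 'M[R]_(m, q)) omega ys y : M *m ys = c ->
  D ys - D (sdsa_step A B b x0 omega Sm y) =
  D ys - D y - omega * (2 - omega) / 2 *
     ip (M *m (y - ys)) (Hmat A B Sm *m (M *m (y - ys))).
Proof.
move=> hys; set e := y - ys; have [Hs HMH] := H_props Sm; set H := Hmat A B Sm in Hs HMH *.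
rewrite !gE // (stepE _ _ _ hys) -/H; clearbody H.
have -> : y + omega *: (H *m (M *m (ys - y))) - ys = e - omega *: (H *m (M *m e)).
  by rewrite (_ : ys - y = - e) 1?mulmxN 1?mulmxN 1?scalerN 1?addrAC // /e opprB.
rewrite -/e; clearbody e.
set h := H *m (M *m e).
rewrite mulmxBr -scalemxAr !ipBl !ipBr !ipZl !ipZr.
have -> : ip e (M *m h) = ip (M *m e) h by rewrite ipM M_sym.
have -> : ip h (M *m e) = ip (M *m e) h by rewrite ipC.
have -> : ip h (M *m h) = ip (M *m e) h.
  by rewrite /h ipC ipM Hs (mulmxA H M) (mulmxA (H *m M) H) HMH ipC.
by field.
Qed.

Lemma qZ q (Sm : 'M[R]_(m, q)) e :
  ip (M *m e) (Hmat A B Sm *m (M *m e)) =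
  ip (Bi *m A^T *m e) ((A^T *m Hmat A B Sm *m A) *m (Bi *m A^T *m e)).
Proof.
by rewrite /ip !trmx_mul !trmxK !mulmxA.
Qed.

Lemma eMe e : ip e (M *m e) = ip (Bi *m A^T *m e) (B *m (Bi *m A^T *m e)).
Proof. by rewrite M_quad ip_Bi !mulmxA. Qed.


Lemma range_lem (EZ : 'M[R]_n) : EZ^T = EZ ->
  (forall v : 'cV[R]_n, EZ *m v = 0 <-> A *m v = 0) ->
  forall e : 'cV[R]_m, exists w : 'cV[R]_n, A^T *m e = EZ *m w.
Proof.
move=> Es ex e.
have sub : (A <= EZ)%MS.
  rewrite submxE; apply/eqP/matrixP => i j; rewrite [RHS]mxE.
  have h : EZ *m col j (cokermx EZ) = 0 by rewrite colE mulmxA mulmx_coker mul0mx.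
  have /matrixP/(_ i 0) := (ex _).1 h.
  by rewrite colE mulmxA -colE !mxE.
have : (e^T *m A <= EZ)%MS := submx_trans (submxMl _ _) sub.
case/submxP => Dm hD; exists Dm^T.
by have := congr1 trmx hD; rewrite !trmx_mul trmxK Es.
Qed.

Lemma W_bound (EZ : 'M[R]_n) lam : EZ^T = EZ ->
  (forall v : 'cV[R]_n, EZ *m v = 0 <-> A *m v = 0) ->
  is_lambda_min_plus (mxsqrt Bi *m EZ *m mxsqrt Bi) lam ->
  forall e : 'cV[R]_m,
  lam * ip (Bi *m A^T *m e) (B *m (Bi *m A^T *m e)) <=
  ip (Bi *m A^T *m e) (EZ *m (Bi *m A^T *m e)).
Proof.
move=> Es ex; rewrite /mxsqrt; case: xgetP => [X _ [[Xs _] XX]|_]; last first.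
  case=> eig lamn0 _; move/eigenvalueP: eig => [v].
  rewrite !mulmx0 => /esym/eqP; rewrite scalemx_eq0 (negbTE lamn0) /= => /eqP.
  by move=> v0; rewrite v0 eqxx.
move=> Hl e.
have Xu : X \in unitmx.
  by have := unitmx_inv B; rewrite B_unit -XX unitmx_mul => /andP[].
have [w hw] := range_lem Es ex e.
set a := A^T *m e.
set z := X *m a.
have Wsym : (X *m EZ *m X)^T = X *m EZ *m X.
  by rewrite !trmx_mul Es Xs mulmxA.
have zW : z = (X *m EZ *m X) *m (invmx X *m w).
  by rewrite -mulmxA mulKVmx // /z /a hw mulmxA.
have := @spec_bound R _ _ _ _ _ Wsym Hl zW.
have xE : Bi *m A^T *m e = X *m z by rewrite /z mulmxA XX mulmxA.
rewrite xE.
have -> : ip (X *m z) (B *m (X *m z)) = ip z z.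
  rewrite -xE -mulmxA -/a -ip_Bi /z /ip [(X *m a)^T]trmx_mul Xs -mulmxA (mulmxA X X) XX.
  by [].
have -> : ip (X *m z) (EZ *m (X *m z)) = ip z (X *m EZ *m X *m z).
  by rewrite ipC ipM ipC Xs !mulmxA.
by rewrite /ip !mulmxA.
Qed.

End Prob.

Local Open Scope classical_set_scope.

Lemma le_int_ge0 d (T : measurableType d) (R : realType)
  (mu : {measure set T -> \bar R}) (f g : T -> \bar R) :
  (forall x, (0 <= f x)%E) -> (forall x, (f x <= g x)%E) ->
  (\int[mu]_x f x <= \int[mu]_x g x)%E.
Proof.
move=> f0 fg; have g0 x : (0 <= g x)%E := le_trans (f0 x) (fg x).
rewrite !ge0_integralTE //; apply: ereal_sup_le => _ [h hf <-].
by exists h => //= x; exact: le_trans (hf x) (fg x).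
Qed.

Lemma int_affine d (T : measurableType d) (R : realType)
  (mu : probability T R) (I : finType) (a : R) (c : I -> R) (f : I -> T -> R) :
  (forall i, mu.-integrable setT (fun t => (f i t)%:E)) ->
  mu.-integrable setT (fun t => (a + \sum_i c i * f i t)%:E) /\
  (\int[mu]_t (a + \sum_i c i * f i t)%:E =
     (a + \sum_i c i * fine (\int[mu]_t (f i t)%:E))%:E)%E.
Proof.
move=> fi.
have fE : (fun t => (a + \sum_i c i * f i t)%:E) =
          (fun t => a%:E + \sum_i ((c i)%:E * (f i t)%:E))%E.
  apply: funext => t; rewrite EFinD -sumEFin; congr (_ + _)%E.
have ci : mu.-integrable setT (fun t => (\sum_i ((c i)%:E * (f i t)%:E))%E).
  by apply: integrable_sum => // i _; apply: integrableZl.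
rewrite fE; split.
  apply: (integrableD measurableT) => //.
  exact: finite_measure_integrable_cst.
rewrite integralD //; last exact: finite_measure_integrable_cst.
rewrite integral_cst // [X in (_ * X)%E](_ : _ = 1%E) ?mule1; last exact: probability_setT.
rewrite integral_sum //; last by move=> i; apply: integrableZl.
rewrite EFinD -sumEFin; congr (_ + _)%E; apply: eq_bigr => i _.
by rewrite integralZl // EFinM fineK //; apply: integrable_fin_num.
Qed.

Theorem mainTheorem8 (R : realType) (m n : nat)
  (A : 'M[R]_(m, n)) (b : 'cV[R]_m) (B : 'M[R]_n) (x0 : 'cV[R]_n)
  (d : measure_display) (T : measurableType d) (mu : probability T R)
  (S : T -> {q : nat & 'M[R]_(m, q)})
  (omega lam : R) (ystar : 'cV[R]_m) :
  (exists x : 'cV[R]_n, A *m x = b) ->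
  spd B ->
  (* measurability / integrability of the random matrices H and Z *)
  (forall i j, measurable_fun setT
     (fun t => Hmat A B (projT2 (S t)) i j)) ->
  (forall i j, mu.-integrable setT
     (fun t => ((A^T *m Hmat A B (projT2 (S t)) *m A) i j)%:E)) ->
  let EZ : 'M[R]_n := \matrix_(i, j)
     fine (\int[mu]_t ((A^T *m Hmat A B (projT2 (S t)) *m A) i j)%:E)%E in
  (* exactness *)
  (forall x : 'cV[R]_n, EZ *m x = 0 <-> A *m x = 0) ->
  A != 0 ->
  is_lambda_min_plus (mxsqrt (invmx B) *m EZ *m mxsqrt (invmx B)) lam ->
  0 < omega < 2 ->
  (forall y, dualD A B b x0 y <= dualD A B b x0 ystar) ->
  forall k : nat,
    (iid_expect mu k (fun s =>
       (dualD A B b x0 ystar - dualD A B b x0 (sdsa_iter A B b x0 omega S 0 s))%:E)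
     <= ((1 - omega * (2 - omega) * lam) ^+ k
         * (dualD A B b x0 ystar - dualD A B b x0 0))%:E)%E.
Proof.
move=> _ Bspd _ Hint EZ exact An0 Hl /andP[om0 om2] Hmax.
have hys : A *m invmx B *m A^T *m ystar = b - A *m x0 := opt_eq Bspd Hmax.
set G := fun y : 'cV[R]_m => dualD A B b x0 ystar - dualD A B b x0 y.
have G0 y : 0 <= G y by rewrite /G subr_ge0.
set rho := 1 - omega * (2 - omega) * lam.
set kap := omega * (2 - omega) / 2.
have kap0 : 0 <= kap by rewrite /kap; apply: divr_ge0 => //; apply: mulr_ge0; lra.
have EZsym : EZ^T = EZ.
  apply/matrixP => i j; rewrite /EZ !mxE; congr fine; apply: eq_integral => t _.
  have [Hs _] := H_props A Bspd (projT2 (S t)).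
  have Zs : (A^T *m Hmat A B (projT2 (S t)) *m A)^T =
            A^T *m Hmat A B (projT2 (S t)) *m A.
    move: Hs; move: (Hmat A B (projT2 (S t))) => H' Hs'.
    by rewrite !trmx_mul trmxK Hs' mulmxA.
  by have := congr1 (fun M' : 'M[R]_n => M' i j) Zs; rewrite mxE => ->.
have OS : forall y,
  mu.-integrable setT
    (fun t => (G (sdsa_step A B b x0 omega (projT2 (S t)) y))%:E) /\
  (\int[mu]_t (G (sdsa_step A B b x0 omega (projT2 (S t)) y))%:E
     <= (rho * G y)%:E)%E.
  move=> y; set e := y - ystar; set x := invmx B *m A^T *m e.
  have stepE' t : G (sdsa_step A B b x0 omega (projT2 (S t)) y) =
     G y + \sum_(p : 'I_n * 'I_n) (- (kap * (x p.1 0 * x p.2 0))) *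
        (A^T *m Hmat A B (projT2 (S t)) *m A) p.1 p.2.
    rewrite /G (g_step Bspd _ _ _ hys) -/e -/kap qZ -/x quad_sum pair_bigA.
    congr (_ + _); rewrite mulr_sumr -sumrN; apply: eq_bigr => p _; ring.
  have [fint fval] := @int_affine _ _ _ mu _ (G y)
    (fun p : 'I_n * 'I_n => - (kap * (x p.1 0 * x p.2 0)))
    (fun p t => (A^T *m Hmat A B (projT2 (S t)) *m A) p.1 p.2)
    (fun p => Hint p.1 p.2).
  have fE : (fun t => (G (sdsa_step A B b x0 omega (projT2 (S t)) y))%:E) =
    (fun t => (G y + \sum_(p : 'I_n * 'I_n) (- (kap * (x p.1 0 * x p.2 0))) *
        (A^T *m Hmat A B (projT2 (S t)) *m A) p.1 p.2)%:E).
    by apply: funext => t; rewrite stepE'.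
  rewrite fE; split => //; rewrite fval lee_fin.
  have -> : \sum_(p : 'I_n * 'I_n) - (kap * (x p.1 0 * x p.2 0)) *
      fine (\int[mu]_t ((A^T *m Hmat A B (projT2 (S t)) *m A) p.1 p.2)%:E)%E
      = - (kap * ip x (EZ *m x)).
    rewrite quad_sum pair_bigA mulr_sumr -sumrN; apply: eq_bigr => p _.
    clearbody x; rewrite /EZ mxE; ring.
  have Wb := W_bound Bspd EZsym exact Hl e.
  have GyE : G y = 2^-1 * ip x (B *m x).
    by rewrite /G (gE Bspd _ hys) -/e (eMe A Bspd).
  have h := ler_wpM2l kap0 Wb.
  rewrite -/x in h; rewrite GyE /rho; rewrite /kap in h *.
  nra.
have rho0 : 0 <= rho.
  have /existsP [[i j] /= Aij] : [exists p : 'I_m * 'I_n, A p.1 p.2 != 0].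
    apply: contraNT An0 => /existsPn h; apply/eqP/matrixP => i j; rewrite mxE.
    by move: (h (i, j)); rewrite negbK => /eqP.
  set e0 : 'cV[R]_m := delta_mx i 0.
  have a0 : A^T *m e0 != 0.
    apply/negP => /eqP /matrixP /(_ j 0); rewrite -colE !mxE => h.
    by rewrite h eqxx in Aij.
  have Gp : 0 < G (ystar + e0).
    rewrite /G (gE Bspd _ hys) (addrC ystar) addrK (M_quad A B).
    by apply: mulr_gt0; [rewrite invr_gt0 ltr0n | apply: Bi_gt0].
  have [_ h] := OS (ystar + e0).
  have : (0 <= (rho * G (ystar + e0))%:E)%E.
    apply: le_trans h; apply: integral_ge0 => t _; rewrite lee_fin; exact: G0.
  by rewrite lee_fin pmulr_lge0.
have main : forall k y,
  (0 <= iid_expect mu k (fun s => (G (sdsa_iter A B b x0 omega S y s))%:E))%E /\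
  (iid_expect mu k (fun s => (G (sdsa_iter A B b x0 omega S y s))%:E)
     <= (rho ^+ k * G y)%:E)%E.
  elim => [|k IH] y /=.
    by split; [rewrite lee_fin; exact: G0 | rewrite expr0 mul1r].
  split.
    by apply: integral_ge0 => t _; exact: (IH _).1.
  apply: le_trans.
    apply: (@le_int_ge0 _ _ _ mu _
      (fun t => (rho ^+ k * G (sdsa_step A B b x0 omega (projT2 (S t)) y))%:E)).
      by move=> t; exact: (IH _).1.
    by move=> t; exact: (IH _).2.
  have [fi fb] := OS y.
  under eq_integral do rewrite EFinM.
  rewrite integralZl //.
  rewrite exprSr -mulrA EFinM.
  apply: lee_wpmul2l => //; rewrite lee_fin; exact: exprn_ge0.
move=> k; exact: (main k 0).2.
Qed.
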